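(* Let $D$ be $\mathbb{C}$ or the quaternions $\mathbb{H}$, viewed as a real algebra, and let $n \geq 1$. Let \[ f_n : D^n \times D^n \to D^n,\quad ((a_1,\ldots,a_n),(b_1,\ldots,b_n)) \mapsto (a_1 b_1, \ldots, a_n b_n) \] be componentwise multiplication, regarded as an $\mathbb{R}$-bilinear map. Then $Q(f_n) = n q$, where $q = Q(f_1)$ is the subrank of the multiplication map $D\times D\to D$. (In particular, $Q(f_n)=n$ for $D=\mathbb{C}$ and $Q(f_n)=2n$ for $D=\mathbb{H}$.)
   Context: For an $\mathbb{R}$-bilinear map $f : U \times V \to W$ between finite-dimensional real vector spaces, its subrank $Q(f)$ is the largest $r$ such that there exist $\mathbb{R}$-linear maps $\varphi_1 : \mathbb{R}^r \to U$, $\varphi_2 : \mathbb{R}^r \to V$, $\varphi_3 : W \to \mathbb{R}^r$ with $\varphi_3(f(\varphi_1(a), \varphi_2(b))) = (a_1b_1,\ldots,a_rb_r)$ for all $a,b \in \mathbb{R}^r$. $\mathbb{H}$ denotes Hamilton's quaternions with basis $1,i,j,k$ and $i^2=j^2=k^2=-1$, $ij=k$, $jk=i$, $ki=j$. *)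

(* Defs.v *)
From HB Require Import structures.
From mathcomp Require Import all_boot all_order all_algebra.
From mathcomp Require Import reals.
Set Implicit Arguments. Unset Strict Implicit. Unset Printing Implicit Defensive.
Import Order.TTheory GRing.Theory Num.Theory.
Local Open Scope ring_scope.

Section Defs.
Variable R : realType.

Definition subrank_achieves (U V W : lmodType R) (f : U -> V -> W) (r : nat) : Prop :=
  exists (p1 : {linear 'rV[R]_r -> U}) (p2 : {linear 'rV[R]_r -> V})
         (p3 : {linear W -> 'rV[R]_r}),
    forall a b : 'rV[R]_r, p3 (f (p1 a) (p2 b)) = \row_j (a 0 j * b 0 j).

Definition is_subrank (U V W : lmodType R) (f : U -> V -> W) (r : nat) : Prop :=
  subrank_achieves f r /\ forall r', subrank_achieves f r' -> (r' <= r)%N.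

Definition crd (d : nat) (x : 'rV[R]_d.+1) (i : nat) : R := x 0 (inord i).

(* Complex multiplication on R^2 with basis 1, i. *)
Definition cmulC (a b : 'rV[R]_2) : 'rV[R]_2 :=
  \row_(k < 2) nth 0
    [:: crd a 0 * crd b 0 - crd a 1 * crd b 1;
        crd a 0 * crd b 1 + crd a 1 * crd b 0] k.

(* Quaternion multiplication on R^4 with basis 1, i, j, k,
   i^2 = j^2 = k^2 = -1, ij = k, jk = i, ki = j. *)
Definition qmulH (a b : 'rV[R]_4) : 'rV[R]_4 :=
  \row_(k < 4) nth 0
    [:: crd a 0 * crd b 0 - crd a 1 * crd b 1 - crd a 2 * crd b 2 - crd a 3 * crd b 3;
        crd a 0 * crd b 1 + crd a 1 * crd b 0 + crd a 2 * crd b 3 - crd a 3 * crd b 2;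
        crd a 0 * crd b 2 - crd a 1 * crd b 3 + crd a 2 * crd b 0 + crd a 3 * crd b 1;
        crd a 0 * crd b 3 + crd a 1 * crd b 2 - crd a 2 * crd b 1 + crd a 3 * crd b 0] k.

(* D^n is represented as n x d real matrices, row i being the i-th component.
   f_n multiplies componentwise. *)
Definition compmul (d n : nat) (mul : 'rV[R]_d -> 'rV[R]_d -> 'rV[R]_d)
  (A B : 'M[R]_(n, d)) : 'M[R]_(n, d) :=
  \matrix_(i < n, k < d) (mul (row i A) (row i B)) 0 k.

End Defs.
Arguments compmul {R d} n mul A B.

(* Main.v *)
Require Import Defs.
From HB Require Import structures.
From mathcomp Require Import all_boot all_order all_algebra.
From mathcomp Require Import reals.
From mathcomp Require Import zify ring lra.
Set Implicit Arguments. Unset Strict Implicit. Unset Printing Implicit Defensive.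
Import Order.TTheory GRing.Theory Num.Theory.
Local Open Scope ring_scope.
Definition mklin (R : pzRingType) (U V : lmodType R) (f : U -> V) (H : linear f) : {linear U -> V} :=
  HB.pack f (GRing.isLinear.Build R U V *:%R f H).
Section Upper.
Variable R : realType.
Variables (d n r e : nat) (mul : 'rV[R]_d -> 'rV[R]_d -> 'rV[R]_d).
Hypothesis mul_linr : forall x, linear (mul x).
Hypothesis mm0l : forall y, mul 0 y = 0.
Hypothesis mm0r : forall x, mul x 0 = 0.
Hypothesis mul_nz : forall x y, x != 0 -> mul x y = 0 -> y = 0.
Hypothesis de : d = (e + e)%N.

Definition fT (T : {set 'I_n}) (A B : 'M[R]_(n,d)) : 'M[R]_(n,d) :=
  \matrix_(i, k) (if i \in T then mul (row i A) (row i B) 0 k else 0).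

Lemma row_fT T A B i : row i (fT T A B) = if i \in T then mul (row i A) (row i B) else 0.
Proof. by apply/rowP => k; rewrite !mxE; case: ifP => _; rewrite ?mxE. Qed.

Variables (p1 p2 : {linear 'rV[R]_r -> 'M[R]_(n,d)}) (p3 : {linear 'M[R]_(n,d) -> 'rV[R]_r}).

Definition urow (a b : 'rV[R]_r) : 'rV[R]_r := \row_j (a 0 j * b 0 j).

Lemma none_case (T : {set 'I_n}) (Y Z : {vspace 'rV[R]_r}) :
  (forall i : 'I_r, forall m, m \in T -> row m (p1 (delta_mx 0 i)) = 0) ->
  (forall a b, b \in Y -> p3 (fT T (p1 a) (p2 b)) - urow a b \in Z) ->
  (\dim Y <= \dim Z)%N.
Proof.
move=> H0 hyp; apply: dimvS; apply/subvP => b bY.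
pose one : 'rV[R]_r := const_mx 1.
have := hyp one b bY.
have -> : fT T (p1 one) (p2 b) = 0.
  apply/row_matrixP => m; rewrite row_fT row0; case: ifP => // mT.
  rewrite (row_sum_delta one) linear_sum.
  have -> : row m (\sum_(j < r) p1 (one 0 j *: delta_mx 0 j)) = 0.
    rewrite rowE mulmx_sumr big1 // => j _.
    by rewrite linearZ /= -scalemxAr -rowE H0 // scaler0.
  by rewrite mm0l.
have -> : urow one b = b by apply/rowP => j; rewrite !mxE mul1r.
by rewrite linear0 sub0r rpredN.
Qed.
Lemma rowlin m (c : R) (A B : 'M[R]_(n,d)) : row m (c *: A + B) = c *: row m A + row m B.
Proof. by rewrite !rowE mulmxDr scalemxAr. Qed.

Lemma fT_linr (T : {set 'I_n}) u : linear (fT T u).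
Proof.
move=> c y1 y2; apply/row_matrixP => m.
rewrite rowlin !row_fT rowlin; case: ifP => _; first exact: mul_linr.
by rewrite scaler0 addr0.
Qed.

Lemma step (T : {set 'I_n}) (Y Z : {vspace 'rV[R]_r}) (i : 'I_r) :
  let x := p1 (delta_mx 0 i) in
  let P := [set m | row m x != 0] in
  (forall Y Z : {vspace 'rV[R]_r}, (forall a b, b \in Y -> p3 (fT (T :\: P) (p1 a) (p2 b)) - urow a b \in Z) -> (\dim Y <= \dim Z + e * #|T :\: P|)%N) ->
  (forall a b, b \in Y -> p3 (fT T (p1 a) (p2 b)) - urow a b \in Z) ->
  (\dim Y <= \dim Z + e * #|T|)%N.
Proof.
move=> x P IH hyp.
set S := T :&: P; set T' := T :\: P.
have cardT : (#|S| + #|T'|)%N = #|T| := cardsID P T.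
have decomp : forall u y, fT T u y = fT T' u y + fT S u y.
  move=> u y; apply/matrixP => m k; rewrite !mxE in_setD in_setI.
  by case: (m \in T); case: (m \in P) => /=; rewrite ?addr0 ?add0r.
pose MS : {vspace 'M[R]_(n,d)} := <<[seq delta_mx m k | m <- enum S, k <- enum 'I_d]>>%VS.
have dimMS : (\dim MS <= #|S| * d)%N.
  by apply: leq_trans (dim_span _) _; rewrite size_allpairs size_enum_ord -cardE.
have inMS : forall A, (forall m, m \notin S -> row m A = 0) -> A \in MS.
  move=> A HA; rewrite (matrix_sum_delta A); apply: rpred_sum => m _; apply: rpred_sum => k _.
  case: (boolP (m \in S)) => mS.
    apply: rpredZ; apply: memv_span; apply/allpairsP; exists (m, k) => /=.
    by rewrite mem_enum mS mem_enum.
  have -> : A m k = 0 by have := congr1 (fun M : 'rV[R]_d => M 0 k) (HA m mS); rewrite !mxE.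
  by rewrite scale0r rpred0.
have fS_in : forall u y, fT S u y \in MS.
  by move=> u y; apply: inMS => m mS; rewrite row_fT (negbTE mS).
have hlin : linear (fun b => fT T x (p2 b)).
  by move=> c b1 b2 /=; rewrite linearP /= fT_linr.
pose hh := mklin hlin.
pose h := linfun hh; pose g := linfun p3.
have hS : forall b, hh b \in MS.
  move=> b; apply: inMS => m mS; rewrite /= row_fT; case: ifP => mT //.
  have : m \notin P by move: mS; rewrite in_setI mT.
  by rewrite inE negbK => /eqP ->; rewrite mm0l.
have IH1 : (\dim (Y :&: lker h) <= \dim Z + e * #|T'|)%N.
  apply: IH => a b; rewrite memv_cap => /andP[bY]; rewrite memv_ker lfunE /= => /eqP hb0.
  suff <- : fT T (p1 a) (p2 b) = fT T' (p1 a) (p2 b) by exact: hyp.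
  rewrite decomp; suff -> : fT S (p1 a) (p2 b) = 0 by rewrite addr0.
  apply/row_matrixP => m; rewrite row_fT row0; case: ifP => //; rewrite in_setI => /andP[mT mP].
  have : row m (fT T x (p2 b)) = 0 by rewrite hb0 row0.
  rewrite row_fT mT => /mul_nz; rewrite inE in mP => /(_ mP) ->.
  exact: mm0r.
have IH2 : (\dim Y <= \dim (Z + g @: MS) + e * #|T'|)%N.
  apply: IH => a b bY.
  have := hyp a b bY; rewrite decomp linearD /= => hz.
  have -> : p3 (fT T' (p1 a) (p2 b)) - urow a b =
    (p3 (fT T' (p1 a) (p2 b)) + p3 (fT S (p1 a) (p2 b)) - urow a b) + - p3 (fT S (p1 a) (p2 b)).
    by rewrite addrAC addrK.
  apply: memv_add => //; rewrite memvN.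
  by have := memv_img g (fS_in (p1 a) (p2 b)); rewrite lfunE.
have kd1 := limg_ker_dim h Y.
have HsubMS : (h @: Y <= MS)%VS.
  by apply/subvP => v /memv_imgP [b bY ->]; rewrite lfunE; exact: hS.
have kd2 := limg_ker_dim g (h @: Y).
have k1le : (\dim (h @: Y :&: lker g) <= \dim (MS :&: lker g))%N.
  by apply: dimvS; apply: capvS => //; exact: subvv.
pose ei : 'rV[R]_r := delta_mx 0 i.
pose L : {vspace 'rV[R]_r} := <[ei]>%VS.
have gHsub : (g @: (h @: Y) <= (Z + L) :&: g @: MS)%VS.
  rewrite subv_cap; apply/andP; split; last exact: limgS.
  apply/subvP => v /memv_imgP [w /memv_imgP [b bY ->] ->]; rewrite !lfunE /=.
  have hz := hyp (delta_mx 0 i) b bY.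
  rewrite -(subrK (urow (delta_mx 0 i) b) (p3 _)).
  apply: memv_add => //; apply/vlineP; exists (b 0 i); apply/rowP => j; rewrite !mxE eqxx /=.
  by case: (j =P i) => [Eji|_]; [rewrite Eji /= mulr1n mul1r mulr1 | rewrite /= mulr0n mul0r mulr0].
have dimcap : (\dim ((Z + L) :&: g @: MS) <= \dim (Z :&: g @: MS) + 1)%N.
  have s1 := dimv_sum_cap (Z + L) (g @: MS); have s2 := dimv_sum_cap Z (g @: MS).
  have s3 := dimv_sum_cap Z L.
  have l1 : (\dim L <= 1)%N by rewrite dim_vline leq_b1.
  have s4 : (\dim (Z + g @: MS) <= \dim (Z + L + g @: MS))%N.
    by apply: dimvS; apply: addvS; [exact: addvSl | exact: subvv].
  lia.
have gH := dimvS gHsub.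
have kd3 := limg_ker_dim g MS.
have s5 := dimv_sum_cap Z (g @: MS).
rewrite -cardT mulnDr.
have dimMS' : (\dim MS <= e * #|S| + e * #|S|)%N.
  by apply: (leq_trans dimMS); rewrite de mulnDr mulnC.
clear dimMS.
move: IH1 IH2 kd1 kd2 k1le dimcap gH kd3 s5 dimMS'.
set y := \dim Y. set z := \dim Z. set y1 := \dim (Y :&: lker h). set hY := \dim (h @: Y).
set k1 := \dim (h @: Y :&: lker g). set gHY := \dim (g @: (h @: Y)). set kM := \dim (MS :&: lker g).
set gM := \dim (g @: MS). set c := \dim (Z :&: g @: MS). set z2 := \dim (Z + g @: MS).
set cc := \dim ((Z + L) :&: g @: MS). set m := \dim MS. move=> *; lia.
Qed.
Lemma claim k : forall T : {set 'I_n}, (#|T| <= k)%N -> forall Y Z : {vspace 'rV[R]_r},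
  (forall a b, b \in Y -> p3 (fT T (p1 a) (p2 b)) - urow a b \in Z) ->
  (\dim Y <= \dim Z + e * #|T|)%N.
Proof.
elim: k => [|k IH] T hT Y Z hyp.
  have H0 : forall i : 'I_r, forall m, m \in T -> row m (p1 (delta_mx 0 i)) = 0.
    by move=> i m mT; move: hT; rewrite (cardD1 m) mT.
  by apply: leq_trans (none_case H0 hyp) _; rewrite leq_addr.
case: (pickP (fun i : 'I_r => [exists m in T, row m (p1 (delta_mx 0 i)) != 0])) => [i Hi|H0].
  apply: (step (i := i)) hyp => Y' Z' hyp'; apply: IH hyp'.
  case/existsP: Hi => m /andP[mT mx].
  rewrite -ltnS; apply: leq_trans hT; apply: proper_card; rewrite properE subsetDl /=.
  by apply/subsetPn; exists m => //; rewrite in_setD mT inE mx.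
have H0' : forall i : 'I_r, forall m, m \in T -> row m (p1 (delta_mx 0 i)) = 0.
  move=> i m mT; have := H0 i; move/negbT/existsPn/(_ m); rewrite mT /= negbK.
  by move/eqP.
by apply: leq_trans (none_case H0' hyp) _; rewrite leq_addr.
Qed.

End Upper.
Lemma upper_compmul (R : realType) (d n e : nat) (mul : 'rV[R]_d -> 'rV[R]_d -> 'rV[R]_d)
  (mul_linr : forall x, linear (mul x)) (mm0l : forall y, mul 0 y = 0)
  (mm0r : forall x, mul x 0 = 0) (mul_nz : forall x y, x != 0 -> mul x y = 0 -> y = 0)
  (de : d = (e + e)%N) r :
  subrank_achieves (compmul n mul) r -> (r <= e * n)%N.
Proof.
case=> p1 [p2 [p3 H]].
have := @claim R d n r e mul mul_linr mm0l mm0r mul_nz de p1 p2 p3 n setT.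
rewrite cardsT card_ord => /(_ (leqnn n) fullv 0%VS).
rewrite dimvf dimv0 /dim /= mul1n; apply=> a b _.
suff -> : fT mul setT (p1 a) (p2 b) = compmul n mul (p1 a) (p2 b) by rewrite H subrr mem0v.
by apply/matrixP => i k; rewrite !mxE in_setT.
Qed.
Section Conc.
Variable R : realType.

Lemma crd_row d (s : seq R) i : (i < d.+1)%N -> crd (\row_(k < d.+1) nth 0 s k) i = nth 0 s i.
Proof. by move=> hi; rewrite /crd mxE inordK. Qed.

Lemma rv_ext d (x y : 'rV[R]_d.+1) : (forall i, (i < d.+1)%N -> crd x i = crd y i) -> x = y.
Proof. move=> H; apply/rowP => j; have := H j (ltn_ord j); by rewrite /crd inord_val. Qed.

Lemma crdD d c (x y : 'rV[R]_d.+1) i : crd (c *: x + y) i = c * crd x i + crd y i.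
Proof. by rewrite /crd !mxE. Qed.
Lemma crd0 d i : crd (0 : 'rV[R]_d.+1) i = 0.
Proof. by rewrite /crd mxE. Qed.

Lemma cmulC_linr x : linear (@cmulC R x).
Proof.
move=> c y z; apply: rv_ext => i hi; rewrite crdD /cmulC !crd_row // !crdD.
by case: i hi => [|[|i]] //= _; ring.
Qed.
Lemma cmulC0l y : @cmulC R 0 y = 0.
Proof. by apply: rv_ext => i hi; rewrite /cmulC crd_row // !crd0; case: i hi => [|[|i]] //= _; ring. Qed.
Lemma cmulC0r x : @cmulC R x 0 = 0.
Proof. by apply: rv_ext => i hi; rewrite /cmulC crd_row // !crd0; case: i hi => [|[|i]] //= _; ring. Qed.

Lemma qmulH_linr x : linear (@qmulH R x).
Proof.
move=> c y z; apply: rv_ext => i hi; rewrite crdD /qmulH !crd_row // !crdD.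
by case: i hi => [|[|[|[|i]]]] //= _; ring.
Qed.
Lemma qmulH0l y : @qmulH R 0 y = 0.
Proof. by apply: rv_ext => i hi; rewrite /qmulH crd_row // !crd0; case: i hi => [|[|[|[|i]]]] //= _; ring. Qed.
Lemma qmulH0r x : @qmulH R x 0 = 0.
Proof. by apply: rv_ext => i hi; rewrite /qmulH crd_row // !crd0; case: i hi => [|[|[|[|i]]]] //= _; ring. Qed.

Lemma sq2_eq0 (a b : R) : a * a + b * b = 0 -> a = 0 /\ b = 0.
Proof. move=> h; split; nra. Qed.
Lemma sq4_eq0 (a b c d : R) : a * a + b * b + c * c + d * d = 0 -> [/\ a = 0, b = 0, c = 0 & d = 0].
Proof. move=> h; split; nra. Qed.

Lemma cmulC_nz x y : x != 0 -> @cmulC R x y = 0 -> y = 0.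
Proof.
move=> xn0 H.
have E0 := congr1 (fun v => crd v 0) H; have E1 := congr1 (fun v => crd v 1) H.
rewrite /= /cmulC !crd_row // !crd0 /= in E0 E1.
move: E0 E1; set x0 := crd x 0; set x1 := crd x 1; set y0 := crd y 0; set y1 := crd y 1 => E0 E1.
have N0 : x0 * x0 + x1 * x1 != 0.
  apply: contra xn0 => /eqP /sq2_eq0 [h0 h1]; apply/eqP; apply: rv_ext => i hi; rewrite crd0.
  by case: i hi => [|[|i]] //= _.
have k0 : (x0 * x0 + x1 * x1) * y0 = x0 * (x0 * y0 - x1 * y1) + x1 * (x0 * y1 + x1 * y0) by ring.
have k1 : (x0 * x0 + x1 * x1) * y1 = x0 * (x0 * y1 + x1 * y0) - x1 * (x0 * y0 - x1 * y1) by ring.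
rewrite E0 E1 !mulr0 ?addr0 ?subr0 in k0 k1.
apply: rv_ext => i hi; rewrite crd0; case: i hi => [|[|i]] //= _.
  by move/eqP: k0; rewrite mulf_eq0 (negbTE N0) => /eqP.
by move/eqP: k1; rewrite mulf_eq0 (negbTE N0) => /eqP.
Qed.

Lemma qmulH_nz x y : x != 0 -> @qmulH R x y = 0 -> y = 0.
Proof.
move=> xn0 H.
have E0 := congr1 (fun v => crd v 0) H; have E1 := congr1 (fun v => crd v 1) H.
have E2 := congr1 (fun v => crd v 2) H; have E3 := congr1 (fun v => crd v 3) H.
rewrite /= /qmulH !crd_row // !crd0 /= in E0 E1 E2 E3.
move: E0 E1 E2 E3.
set x0 := crd x 0; set x1 := crd x 1; set x2 := crd x 2; set x3 := crd x 3.
set y0 := crd y 0; set y1 := crd y 1; set y2 := crd y 2; set y3 := crd y 3 => E0 E1 E2 E3.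
set N := x0 * x0 + x1 * x1 + x2 * x2 + x3 * x3.
have N0 : N != 0.
  apply: contra xn0 => /eqP /sq4_eq0 [h0 h1 h2 h3]; apply/eqP; apply: rv_ext => i hi; rewrite crd0.
  by case: i hi => [|[|[|[|i]]]] //= _.
have k0 : N * y0 = x0 * (x0 * y0 - x1 * y1 - x2 * y2 - x3 * y3) + x1 * (x0 * y1 + x1 * y0 + x2 * y3 - x3 * y2)
   + x2 * (x0 * y2 - x1 * y3 + x2 * y0 + x3 * y1) + x3 * (x0 * y3 + x1 * y2 - x2 * y1 + x3 * y0) by rewrite /N; ring.
have k1 : N * y1 = x0 * (x0 * y1 + x1 * y0 + x2 * y3 - x3 * y2) - x1 * (x0 * y0 - x1 * y1 - x2 * y2 - x3 * y3)
   - x2 * (x0 * y3 + x1 * y2 - x2 * y1 + x3 * y0) + x3 * (x0 * y2 - x1 * y3 + x2 * y0 + x3 * y1) by rewrite /N; ring.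
have k2 : N * y2 = x0 * (x0 * y2 - x1 * y3 + x2 * y0 + x3 * y1) + x1 * (x0 * y3 + x1 * y2 - x2 * y1 + x3 * y0)
   - x2 * (x0 * y0 - x1 * y1 - x2 * y2 - x3 * y3) - x3 * (x0 * y1 + x1 * y0 + x2 * y3 - x3 * y2) by rewrite /N; ring.
have k3 : N * y3 = x0 * (x0 * y3 + x1 * y2 - x2 * y1 + x3 * y0) - x1 * (x0 * y2 - x1 * y3 + x2 * y0 + x3 * y1)
   + x2 * (x0 * y1 + x1 * y0 + x2 * y3 - x3 * y2) - x3 * (x0 * y0 - x1 * y1 - x2 * y2 - x3 * y3) by rewrite /N; ring.
rewrite E0 E1 E2 E3 !mulr0 ?addr0 ?subr0 in k0 k1 k2 k3.
have z : forall t, N * t = 0 -> t = 0 by move=> t /eqP; rewrite mulf_eq0 (negbTE N0) => /eqP.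
apply: rv_ext => i hi; rewrite crd0; case: i hi => [|[|[|[|i]]]] //= _; exact: z.
Qed.
End Conc.

Section Low.
Variable R : realType.

Lemma I2 (t : 'I_2) : t = ord0 \/ t = ord_max.
Proof. by case: t => [[|[|t]] Ht]; [left|right|by []]; apply/eqP. Qed.

Lemma compmul1 d (mul : 'rV[R]_d -> 'rV[R]_d -> 'rV[R]_d) (A B : 'M[R]_(1,d)) :
  compmul 1 mul A B = mul A B.
Proof.
have r0 : forall M : 'M[R]_(1,d), row 0 M = M.
  by move=> M; apply/matrixP => i j; rewrite mxE (ord1 i).
by apply/matrixP => i k; rewrite mxE (ord1 i) !r0.
Qed.

Lemma ach1 d (mul : 'rV[R]_d -> 'rV[R]_d -> 'rV[R]_d) r :
  subrank_achieves mul r <-> subrank_achieves (compmul 1 mul) r.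
Proof.
split; case=> p1 [p2 [p3 H]]; exists p1, p2, p3 => a b.
  by rewrite compmul1.
by rewrite -compmul1.
Qed.

Definition pC n (a : 'rV[R]_(n * 1)) : 'M[R]_(n, 2) :=
  \matrix_(m, k) (if (k : nat) == 0%N then a 0 (mxvec_index m ord0) else 0).
Definition qC n (W : 'M[R]_(n, 2)) : 'rV[R]_(n * 1) :=
  mxvec (\matrix_(m < n, t < 1) W m ord0).

Lemma pC_lin n : linear (@pC n).
Proof. by move=> c a b; apply/matrixP => m k; rewrite !mxE; case: ifP => _; rewrite ?mulr0 ?addr0. Qed.
Lemma qC_lin n : linear (@qC n).
Proof.
move=> c a b; apply/rowP => j; case/(@mxvec_indexP n 1): j => m t.
by rewrite !mxE !mxvecE !mxE.
Qed.

Lemma lowC n : subrank_achieves (compmul n (@cmulC R)) (n * 1).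
Proof.
exists (mklin (@pC_lin n)), (mklin (@pC_lin n)), (mklin (@qC_lin n)) => a b /=.
apply/rowP => j; case/(@mxvec_indexP n 1): j => m t.
rewrite /qC mxvecE !mxE /cmulC /crd !mxE !inordK //= (ord1 t).
by rewrite mulr0 subr0.
Qed.
End Low.
Section LowH.
Variable R : realType.
Definition pH1 n (a : 'rV[R]_(n * 2)) : 'M[R]_(n, 4) :=
  \matrix_(m, k) (if (k : nat) == 0%N then a 0 (mxvec_index m ord0)
                  else if (k : nat) == 1%N then a 0 (mxvec_index m ord_max) else 0).
Definition pH2 n (a : 'rV[R]_(n * 2)) : 'M[R]_(n, 4) :=
  \matrix_(m, k) (if (k : nat) == 0%N then a 0 (mxvec_index m ord0)
                  else if (k : nat) == 2%N then a 0 (mxvec_index m ord_max) else 0).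
Definition qH n (W : 'M[R]_(n, 4)) : 'rV[R]_(n * 2) :=
  mxvec (\matrix_(m < n, t < 2) (if t == ord0 then W m (inord 0) else W m (inord 3))).

Lemma pH1_lin n : linear (@pH1 n).
Proof. by move=> c a b; apply/matrixP => m k; rewrite !mxE; do 2?case: ifP => _; rewrite ?mulr0 ?addr0. Qed.
Lemma pH2_lin n : linear (@pH2 n).
Proof. by move=> c a b; apply/matrixP => m k; rewrite !mxE; do 2?case: ifP => _; rewrite ?mulr0 ?addr0. Qed.
Lemma qH_lin n : linear (@qH n).
Proof.
move=> c a b; apply/rowP => j; case/(@mxvec_indexP n 2): j => m t.
by rewrite !mxE !mxvecE !mxE; case: ifP.
Qed.

Lemma lowH n : subrank_achieves (compmul n (@qmulH R)) (n * 2).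
Proof.
exists (mklin (@pH1_lin n)), (mklin (@pH2_lin n)), (mklin (@qH_lin n)) => a b /=.
apply/rowP => j; case/(@mxvec_indexP n 2): j => m t.
rewrite /qH mxvecE !mxE; case: (I2 t) => -> /=;
rewrite /qmulH /crd !mxE !inordK //=; ring.
Qed.
End LowH.

Theorem corollary5p4 (R : realType) (n : nat) : (0 < n)%N ->
  (exists q : nat, is_subrank (@cmulC R) q /\
                   is_subrank (compmul n (@cmulC R)) (n * q)) /\
  (exists q : nat, is_subrank (@qmulH R) q /\
                   is_subrank (compmul n (@qmulH R)) (n * q)).
Proof.
move=> _; split.
- exists 1%N; split; split.
  + by apply/ach1; exact: (lowC R 1).
  + move=> r' /ach1 h.
    have := @upper_compmul R 2 1 1 (@cmulC R) (@cmulC_linr R) (@cmulC0l R) (@cmulC0r R)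
      (@cmulC_nz R) erefl r' h.
    by rewrite muln1.
  + exact: lowC.
  + move=> r' h.
    have := @upper_compmul R 2 n 1 (@cmulC R) (@cmulC_linr R) (@cmulC0l R) (@cmulC0r R)
      (@cmulC_nz R) erefl r' h.
    by rewrite mul1n muln1.
- exists 2%N; split; split.
  + by apply/ach1; exact: (lowH R 1).
  + move=> r' /ach1 h.
    have := @upper_compmul R 4 1 2 (@qmulH R) (@qmulH_linr R) (@qmulH0l R) (@qmulH0r R)
      (@qmulH_nz R) erefl r' h.
    by rewrite muln1.
  + exact: lowH.
  + move=> r' h.
    have := @upper_compmul R 4 n 2 (@qmulH R) (@qmulH_linr R) (@qmulH0l R) (@qmulH0r R)
      (@qmulH_nz R) erefl r' h.
    by rewrite mulnC.
Qed.
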